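(* (i) If $b\neq0$, then for all $0\le k\le n$, $$E_{n,k}(a,b;c_0,c_\infty)=\frac1{b^kk!}\sum_{j=0}^k(-1)^{k-j}\binom kj(bn+c_0+c_\infty)^{\underline{k-j},b}\,(c_0+c_\infty)^{\overline j,b}\,(bj+c_0)^{\underline n,a}.$$ (ii) For all complex $a,b,c_0,c_\infty$ and all $n\ge0$, as polynomials in $x$, $$(c_0+c_\infty)^{\overline n,b}\,(x)^{\underline n,a}=\sum_{k=0}^nE_{n,k}(a,b;c_0,c_\infty)\,(x-c_0)^{\underline k,b}\,(x+c_\infty)^{\overline{n-k},b}.$$
   Context: GKP triangle $\left[\begin{array}{cc|c}\alpha,&\beta&\gamma\\ \alpha',&\beta'&\gamma'\end{array}\right]_{n,k}$: defined by $T_{0,0}=1$, $T_{n,k}=0$ if $n<0$, $k<0$ or $k>n$, and $T_{n+1,k+1}=[\alpha n+\beta(k+1)+\gamma]T_{n,k+1}+[\alpha' n+\beta' k+\gamma']T_{n,k}$ for $n\ge0$, $k\in\mathbb Z$. Generalized Eulerian numbers: $E_{n,k}(a,b;c_0,c_\infty):=\left[\begin{array}{cc|c}-a,&b&c_0\\ a+b,&-b&c_\infty\end{array}\right]_{n,k}$, i.e. $E_{n+1,k+1}=[-an+b(k+1)+c_0]E_{n,k+1}+[(a+b)n-bk+c_\infty]E_{n,k}$. $(x)^{\overline n,b}=\prod_{i=0}^{n-1}(x+ib)$, $(x)^{\underline n,b}=\prod_{i=0}^{n-1}(x-ib)$ (empty product $=1$). *)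

(* Defs.v *)
From HB Require Import structures.
From mathcomp Require Import all_boot all_order all_algebra.
Set Implicit Arguments. Unset Strict Implicit. Unset Printing Implicit Defensive.
Import Order.TTheory GRing.Theory Num.Theory.
Local Open Scope ring_scope.

(* GKP triangle [alpha, beta | gamma ; alpha', beta' | gamma']_{n,k},
   with k : nat (T_{n,k} = 0 for k < 0 is built in: the k = 0 case of the
   recurrence has the T_{n,-1} term dropped). *)
Fixpoint GKP (R : nzRingType) (al be ga al' be' ga' : R) (n k : nat) : R :=
  match n with
  | 0%N => (k == 0%N)%:R
  | n'.+1 =>
    match k with
    | 0%N => (al * n'%:R + ga) * GKP al be ga al' be' ga' n' 0
    | k'.+1 => (al * n'%:R + be * k%:R + ga) * GKP al be ga al' be' ga' n' k
             + (al' * n'%:R + be' * k'%:R + ga') * GKP al be ga al' be' ga' n' k'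
    end
  end.

Definition genEuler (R : nzRingType) (a b c0 cinf : R) (n k : nat) : R :=
  GKP (- a) b c0 (a + b) (- b) cinf n k.

Definition rising (R : nzRingType) (x b : R) (n : nat) : R :=
  \prod_(i < n) (x + i%:R * b).

Definition falling (R : nzRingType) (x b : R) (n : nat) : R :=
  \prod_(i < n) (x - i%:R * b).

(* Main.v *)
Require Import Defs.
From HB Require Import structures.
From mathcomp Require Import all_boot all_order all_algebra.
From mathcomp Require Import ring.
Import Order.TTheory GRing.Theory Num.Theory.
Local Open Scope ring_scope.


Lemma risingS (R : comNzRingType) (x b : R) n : rising x b n.+1 = rising x b n * (x + n%:R * b).
Proof. by rewrite /rising big_ord_recr. Qed.
Lemma fallingS (R : comNzRingType) (x b : R) n : falling x b n.+1 = falling x b n * (x - n%:R * b).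
Proof. by rewrite /falling big_ord_recr. Qed.
Lemma fallingSl (R : comNzRingType) (x b : R) n : falling x b n.+1 = x * falling (x - b) b n.
Proof.
rewrite /falling big_ord_recl /= mul0r subr0; congr (_ * _).
by apply: eq_bigr => i _; rewrite /bump /= add1n -addn1 natrD; ring.
Qed.

Lemma GKP_gt (R : comNzRingType) (al be ga al' be' ga' : R) n k : (n < k)%N ->
  GKP al be ga al' be' ga' n k = 0.
Proof.
elim: n k => [|n IH] [|k] //= hk.
by rewrite !IH ?mulr0 ?addr0 // ltnW.
Qed.

Lemma E0S (R : comNzRingType) (a b c0 cinf : R) n : genEuler a b c0 cinf n.+1 0%N =
  (- a * n%:R + c0) * genEuler a b c0 cinf n 0%N.
Proof. by []. Qed.
Lemma ESS (R : comNzRingType) (a b c0 cinf : R) n k : genEuler a b c0 cinf n.+1 k.+1 =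
  (- a * n%:R + b * k.+1%:R + c0) * genEuler a b c0 cinf n k.+1
  + ((a + b) * n%:R + - b * k%:R + cinf) * genEuler a b c0 cinf n k.
Proof. by []. Qed.

Lemma ESSP (R : comNzRingType) (a b c0 cinf : R) n k (p q : {poly R}) :
  (genEuler a b c0 cinf n.+1 k.+1)%:P * p * q =
  ((- a * n%:R + b * k.+1%:R + c0) * genEuler a b c0 cinf n k.+1)%:P * p * q
  + (((a + b) * n%:R + - b * k%:R + cinf) * genEuler a b c0 cinf n k)%:P * p * q.
Proof. by rewrite ESS polyCD mulrDl mulrDl. Qed.

Lemma part2 (R : comNzRingType) (a b c0 cinf : R) (n : nat) :
     (rising (c0 + cinf) b n)%:P * falling 'X a%:P n =
     \sum_(k < n.+1)
        (genEuler a b c0 cinf n k)%:P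
        * falling ('X - c0%:P) b%:P k
        * rising ('X + cinf%:P) b%:P (n - k).
Proof.
elim: n => [|n IH].
  by rewrite big_ord1 /rising /falling !big_ord0 /genEuler /= !mulr1.
rewrite risingS fallingS polyCM mulrACA IH big_distrl /=.
rewrite [RHS]big_ord_recl E0S.
under [X in _ = _ + X]eq_bigr => i _ do rewrite lift0 subSS ESSP.
rewrite big_split /= addrA.
have -> : (((- a * n%:R + c0) * genEuler a b c0 cinf n 0%N)%:P * falling ('X - c0%:P) b%:P 0 * rising ('X + cinf%:P) b%:P (n.+1 - 0)%N +
  \sum_(i < n.+1) ((- a * n%:R + b * i.+1%:R + c0) * genEuler a b c0 cinf n i.+1)%:P * falling ('X - c0%:P) b%:P i.+1 * rising ('X + cinf%:P) b%:P (n - i)%N)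
  = \sum_(k < n.+2) ((- a * n%:R + b * k%:R + c0) * genEuler a b c0 cinf n k)%:P * falling ('X - c0%:P) b%:P k * rising ('X + cinf%:P) b%:P (n.+1 - k)%N.
  by rewrite [RHS]big_ord_recl /= mulr0 addr0.
rewrite [in RHS]big_ord_recr /= [genEuler a b c0 cinf n n.+1]GKP_gt // mulr0 polyC0 !mul0r addr0.
rewrite -big_split /=; apply: eq_bigr => [[k hk]] _ /=.
rewrite subSn // risingS fallingS natrB //.
rewrite !(polyCM, polyCD, polyCN, polyCB, polyC_natr).
ring.
Qed.

Definition Gt {R : comNzRingType} (a b c0 cinf : R) n k j :=
  (-1) ^+ (k - j) * ('C(k, j))%:R
        * falling (b * n%:R + c0 + cinf) b (k - j)
        * rising (c0 + cinf) b j
        * falling (b * j%:R + c0) a n.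
Definition Gs {R : comNzRingType} (a b c0 cinf : R) n k :=
  \sum_(j < k.+1) Gt a b c0 cinf n k j.

Lemma falling0 (R : comNzRingType) (x b : R) : falling x b 0 = 1.
Proof. by rewrite /falling big_ord0. Qed.
Lemma rising0 (R : comNzRingType) (x b : R) : rising x b 0 = 1.
Proof. by rewrite /rising big_ord0. Qed.

Lemma Grec0 (R : comNzRingType) (a b c0 cinf : R) n :
  Gs a b c0 cinf n.+1 0%N = (- a * n%:R + c0) * Gs a b c0 cinf n 0%N.
Proof.
rewrite /Gs !big_ord1 /Gt /= fallingS !falling0 rising0; ring.
Qed.

Lemma GrecS (R : comNzRingType) (a b c0 cinf : R) n k :
  Gs a b c0 cinf n.+1 k.+1 =
  (- a * n%:R + b * k.+1%:R + c0) * Gs a b c0 cinf n k.+1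
  + (b * k.+1%:R * ((a + b) * n%:R + - b * k%:R + cinf)) * Gs a b c0 cinf n k.
Proof.
rewrite /Gs.
have -> : \sum_(j < k.+1) Gt a b c0 cinf n k j = \sum_(j < k.+2) Gt a b c0 cinf n k j.
  by rewrite [RHS]big_ord_recr /= /Gt bin_small // mulr0 !mul0r addr0.
rewrite !big_distrr -big_split; apply: eq_bigr => [[j hj]] _ /=.
move: hj; rewrite ltnS leq_eqVlt => /orP [/eqP -> | hj].
  rewrite /Gt.
  have -> : (k - k.+1 = 0)%N by apply/eqP; rewrite subn_eq0 leqnSn.
  rewrite subnn (bin_small (ltnSn k)) binn fallingS !falling0; ring.
have [m ->] : exists m, k = (j + m)%N by exists (k - j)%N; rewrite subnKC.
have e1 : ((j + m).+1 - j = m.+1)%N by rewrite -addnS addKn.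
have e2 : (j + m - j = m)%N by rewrite addKn.
have H : (m.+1)%:R * ('C((j + m).+1, j))%:R = ((j + m).+1)%:R * ('C(j + m, j))%:R :> R.
  by rewrite -!natrM -e1 -mul_bin_down.
rewrite /Gt e1 e2 exprS fallingSl [falling (b * n%:R + c0 + cinf) b m.+1]fallingS.
rewrite [falling (b * j%:R + c0) a n.+1]fallingS.
have -> : b * (n.+1)%:R + c0 + cinf - b = b * n%:R + c0 + cinf.
  by rewrite -addn1 natrD; ring.
apply/eqP; rewrite -subr_eq0; apply/eqP.
transitivity (- (b * ((a + b) * n%:R + - b * (j + m)%:R + cinf) * (-1) ^+ m
   * falling (b * n%:R + c0 + cinf) b m * rising (c0 + cinf) b j
   * falling (b * j%:R + c0) a n)
   * (((j + m).+1)%:R * ('C(j + m, j))%:R - (m.+1)%:R * ('C((j + m).+1, j))%:R)).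
  ring.
by rewrite -H subrr mulr0.
Qed.

Lemma vander (R : comNzRingType) (x y b : R) k :
  \sum_(j < k.+1) ('C(k, j))%:R * rising x b j * rising y b (k - j)
  = rising (x + y) b k.
Proof.
elim: k => [|k IH]; first by rewrite big_ord1 !rising0 !mulr1.
rewrite risingS -IH big_distrl /= big_ord_recl.
rewrite [X in _ + X = _](eq_bigr (fun i : 'I_k.+1 =>
   ('C(k, i))%:R * rising x b i.+1 * rising y b (k - i) +
   ('C(k, i.+1))%:R * rising x b i.+1 * rising y b (k - i))); last first.
  by move=> i _; rewrite /= /bump /= add1n subSS binS natrD !mulrDl addrC.
rewrite big_split /= addrCA.
have -> : ('C(k.+1, 0%N))%:R * rising x b 0%N * rising y b (k.+1 - 0%N) +
    \sum_(i < k.+1) ('C(k, i.+1))%:R * rising x b i.+1 * rising y b (k - i)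
  = \sum_(j < k.+2) ('C(k, j))%:R * rising x b j * rising y b (k.+1 - j).
  by rewrite [RHS]big_ord_recl !bin0.
rewrite [X in _ + X = _]big_ord_recr /= bin_small // !mul0r addr0 -big_split /=.
apply: eq_bigr => [[j hj]] _ /=.
rewrite subSn // !risingS natrB //; ring.
Qed.

Lemma fallN (R : comNzRingType) (s b : R) m :
  (-1) ^+ m * falling s b m = rising (- s) b m.
Proof.
elim: m => [|m IH]; first by rewrite falling0 rising0 mulr1.
by rewrite fallingS risingS -IH exprS; ring.
Qed.

Lemma G0 (R : comNzRingType) (a b c0 cinf : R) k :
  Gs a b c0 cinf 0%N k.+1 = 0.
Proof.
rewrite /Gs.
transitivity (\sum_(j < k.+2) ('C(k.+1, j))%:R * rising (c0 + cinf) b j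
   * rising (- (c0 + cinf)) b (k.+1 - j)).
  apply: eq_bigr => j _; rewrite /Gt mulr0 add0r falling0 -fallN; ring.
by rewrite vander subrr /rising big_ord_recl mul0r add0r mul0r.
Qed.

Lemma mainG (R : comNzRingType) (a b c0 cinf : R) n k :
  b ^+ k * (k`!)%:R * genEuler a b c0 cinf n k = Gs a b c0 cinf n k.
Proof.
elim: n k => [|n IH] [|k].
- rewrite /Gs big_ord1 /Gt subnn !falling0 rising0 bin0 /genEuler /=; by rewrite fact0 !expr0 !(mulr1, mul1r).
- by rewrite G0 /genEuler /= mulr0.
- rewrite E0S Grec0 -IH; ring.
- rewrite ESS GrecS -!IH factS natrM exprS; ring.
Qed.

Theorem mainTheorem10 (C : numClosedFieldType) :
  (forall (a b c0 cinf : C) (n k : nat), b != 0 -> (k <= n)%N ->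
     genEuler a b c0 cinf n k =
     (b ^+ k * (k`!)%:R)^-1 *
     \sum_(j < k.+1)
        (-1) ^+ (k - j) * ('C(k, j))%:R
        * falling (b * n%:R + c0 + cinf) b (k - j)
        * rising (c0 + cinf) b j
        * falling (b * j%:R + c0) a n)
  /\
  (forall (a b c0 cinf : C) (n : nat),
     (rising (c0 + cinf) b n)%:P * falling 'X a%:P n =
     \sum_(k < n.+1)
        (genEuler a b c0 cinf n k)%:P
        * falling ('X - c0%:P) b%:P k
        * rising ('X + cinf%:P) b%:P (n - k)).
Proof.
split; last exact: part2.
move=> a b c0 cinf n k hb _.
have := @mainG _ a b c0 cinf n k; rewrite /Gs /Gt => <-.
rewrite mulKf //; apply: mulf_neq0; first exact: expf_neq0.
by rewrite pnatr_eq0 -lt0n fact_gt0.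
Qed.
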